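(* Let $\nu_0=0$, $\gamma=0$ and $u>0$, and let $y(t;y_0)$ solve $\dot y=-sy(1-y)+u(1-y)$, $y(0)=y_0\in[0,1]$. Then $$g_r(y_0)=y_0\exp\Big(-s\int_0^r(1-y(\xi;y_0))\,d\xi\Big),\qquad y_0\in[0,1],$$ and in particular $$g_r(y_0)=\begin{cases}y_0\,\dfrac{u-s\,y(r;y_0)}{u-sy_0}, & y_0\in[0,1)\setminus\{u/s\},\\[6pt] y_0\,e^{-rs(1-y_0)}, & y_0\in\{u/s,1\}.\end{cases}$$ Furthermore $g_\infty(y_0)=\lim_{r\to\infty}g_r(y_0)$ exists and satisfies: (i) if $s=0$, then $g_\infty(y_0)=y_0$ for all $y_0\in[0,1]$; (ii) if $u\le s$, then $g_\infty(y_0)=0$ for $y_0\in[0,1)$ and $g_\infty(1)=1$; (iii) if $u>s$, then $g_\infty(y_0)=y_0\frac{u-s}{u-sy_0}$.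
   Context: Embedded ASG process $(a_r)_{r\ge0}$ (with $\gamma=0$, $\nu_0=0$): a random finite rooted tree started from a single unmarked root. Independently at each leaf $\ell$: at rate $s$, two children (left, right) are attached to $\ell$; at rate $u$, one child is attached and $\ell$ is marked $\times$. Typing: given types $c_\ell\in\{0,1\}$ at the leaves, types propagate to the root. A $\times$-marked vertex has type 1, and an outdegree-2 vertex has type 1 iff both children have type 1. Ancestral leaf $\lambda_v$: a leaf is its own ancestral leaf. For an outdegree-2 vertex, $\lambda_v$ is $\lambda$ of the right child if the right child has type 0, and $\lambda$ of the left child otherwise. For an outdegree-1 vertex, $\lambda_v$ is $\lambda$ of its child. $g_r(y_0)$ is the probability that the ancestral leaf of the root of $a_r$ has type 1, when the leaves are typed independently, each with type 1 with probability $y_0$. *)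

(* Defs.v *)
From Stdlib Require Import Reals List Arith.
From Coquelicot Require Import Coquelicot.
Import ListNotations.
Open Scope R_scope.

(* Finite rooted plane trees produced by the embedded ASG (gamma = 0, nu_0 = 0):
   - Leaf       : a leaf
   - Mark t     : a x-marked vertex of outdegree 1 with child t
   - Bin l r    : an (unmarked) vertex of outdegree 2, left child l, right child r *)
Inductive tree : Type :=
| Leaf : tree
| Mark : tree -> tree
| Bin : tree -> tree -> tree.

Fixpoint nleaves (t : tree) : nat :=
  match t with
  | Leaf => 1%nat
  | Mark t' => nleaves t'
  | Bin l r => (nleaves l + nleaves r)%nat
  end.

Fixpoint tsize (t : tree) : nat :=
  match t with
  | Leaf => 0%nat
  | Mark t' => S (tsize t')
  | Bin l r => S (tsize l + tsize r)
  end.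

(* All one-step predecessors of T together with the transition rate:
   one entry per vertex of T of the form [Mark Leaf] (rate u, collapsed to a leaf)
   or [Bin Leaf Leaf] (rate s, collapsed to a leaf). *)
Fixpoint preds (s u : R) (T : tree) : list (tree * R) :=
  match T with
  | Leaf => []
  | Mark t =>
      (match t with Leaf => [(Leaf, u)] | _ => [] end)
      ++ map (fun p => (Mark (fst p), snd p)) (preds s u t)
  | Bin l r =>
      (match l, r with Leaf, Leaf => [(Leaf, s)] | _, _ => [] end)
      ++ map (fun p => (Bin (fst p) r, snd p)) (preds s u l)
      ++ map (fun p => (Bin l (fst p), snd p)) (preds s u r)
  end.

(* Law of a_t (started from a single leaf): the unique solution of the Kolmogorov
   forward equations  d/dt p_t(T) = sum_{T' -> T} rate p_t(T') - (s+u) #leaves(T) p_t(T),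
   written in Duhamel (integral) form and computed by recursion on the number of events. *)
Fixpoint lawn (s u : R) (n : nat) (t : R) (T : tree) : R :=
  match n with
  | O => match T with Leaf => exp (- (s + u) * t) | _ => 0 end
  | S n' =>
      RInt (fun tau =>
              exp (- (s + u) * INR (nleaves T) * (t - tau)) *
              fold_right Rplus 0
                (map (fun p => snd p * lawn s u n' tau (fst p)) (preds s u T)))
           0 t
  end.

Definition law (s u t : R) (T : tree) : R := lawn s u (tsize T) t T.

Fixpoint trees_h (d : nat) : list tree :=
  match d with
  | O => [Leaf]
  | S d' => Leaf :: map Mark (trees_h d')
                 ++ flat_map (fun l => map (Bin l) (trees_h d')) (trees_h d')
  end.

Definition trees_of_size (n : nat) : list tree :=
  filter (fun T => Nat.eqb (tsize T) n) (trees_h n).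

(* all boolean lists of length n (leaf types, listed left to right) *)
Fixpoint bool_lists (n : nat) : list (list bool) :=
  match n with
  | O => [[]]
  | S n' => flat_map (fun cs => [true :: cs; false :: cs]) (bool_lists n')
  end.

(* Given leaf types cs (left to right), returns (type of the vertex,
   type of its ancestral leaf). *)
Fixpoint eval (T : tree) (cs : list bool) : bool * bool :=
  match T with
  | Leaf => let c := hd false cs in (c, c)
  | Mark t => (true, snd (eval t cs))
  | Bin l r =>
      let a := eval l (firstn (nleaves l) cs) in
      let b := eval r (skipn (nleaves l) cs) in
      (andb (fst a) (fst b), if fst b then snd a else snd b)
  end.

Definition weight (y0 : R) (cs : list bool) : R :=
  fold_right Rmult 1 (map (fun c : bool => if c then y0 else 1 - y0) cs).

(* probability that the ancestral leaf of the root of T has type 1, leaves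
   i.i.d. of type 1 with probability y0 *)
Definition ptype (y0 : R) (T : tree) : R :=
  fold_right Rplus 0
    (map (fun cs => weight y0 cs * (if snd (eval T cs) then 1 else 0))
         (bool_lists (nleaves T))).

(* g_r(y0) = sum over finite trees T of P(a_r = T) * ptype y0 T *)
Definition g (s u r y0 : R) : R :=
  Series (fun n => fold_right Rplus 0
            (map (fun T => law s u r T * ptype y0 T) (trees_of_size n))).

(* Main.v *)
Require Import Defs.
From Stdlib Require Import Reals List Permutation Lia Lra.
From Coquelicot Require Import Coquelicot.
Import ListNotations.
Open Scope R_scope.


Definition lsum {A} (f : A -> R) (l : list A) : R := fold_right Rplus 0 (map f l).

Lemma lsum_nil {A} (f : A -> R) : lsum f [] = 0. Proof. reflexivity. Qed.
Lemma lsum_cons {A} (f : A -> R) x l : lsum f (x :: l) = f x + lsum f l. Proof. reflexivity. Qed.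
Lemma lsum_app {A} (f : A -> R) l1 l2 : lsum f (l1 ++ l2) = lsum f l1 + lsum f l2.
Proof. induction l1; simpl; [unfold lsum; simpl; ring|]. unfold lsum in *; simpl; rewrite IHl1; ring. Qed.
Lemma lsum_map {A B} (f : B -> R) (g : A -> B) l : lsum f (map g l) = lsum (fun x => f (g x)) l.
Proof. unfold lsum; rewrite map_map; reflexivity. Qed.
Lemma lsum_flat_map {A B} (f : B -> R) (g : A -> list B) l :
  lsum f (flat_map g l) = lsum (fun x => lsum f (g x)) l.
Proof. induction l; simpl; [reflexivity|]. rewrite lsum_app, IHl; reflexivity. Qed.
Lemma lsum_ext_in {A} (f g : A -> R) l : (forall x, In x l -> f x = g x) -> lsum f l = lsum g l.
Proof. intros H; unfold lsum; f_equal; apply map_ext_in; auto. Qed.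
Lemma lsum_ext {A} (f g : A -> R) l : (forall x, f x = g x) -> lsum f l = lsum g l.
Proof. intros H; apply lsum_ext_in; auto. Qed.
Lemma lsum_plus {A} (f g : A -> R) l : lsum (fun x => f x + g x) l = lsum f l + lsum g l.
Proof. induction l; unfold lsum in *; simpl; [ring|]. rewrite IHl; ring. Qed.
Lemma lsum_opp {A} (f : A -> R) l : lsum (fun x => - f x) l = - lsum f l.
Proof. induction l; unfold lsum in *; simpl; [ring|]. rewrite IHl; ring. Qed.
Lemma lsum_scal {A} (c : R) (f : A -> R) l : lsum (fun x => c * f x) l = c * lsum f l.
Proof. induction l; unfold lsum in *; simpl; [ring|]. rewrite IHl; ring. Qed.
Lemma lsum_scal_r {A} (c : R) (f : A -> R) l : lsum (fun x => f x * c) l = lsum f l * c.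
Proof. induction l; unfold lsum in *; simpl; [ring|]. rewrite IHl; ring. Qed.
Lemma lsum_zero {A} (l : list A) : lsum (fun _ => 0) l = 0.
Proof. induction l; unfold lsum in *; simpl; [ring|]. rewrite IHl; ring. Qed.
Lemma lsum_le {A} (f g : A -> R) l : (forall x, In x l -> f x <= g x) -> lsum f l <= lsum g l.
Proof. induction l; intros H; unfold lsum in *; simpl; [lra|].
  apply Rplus_le_compat; [apply H; simpl; auto | apply IHl; intros; apply H; simpl; auto]. Qed.
Lemma lsum_nonneg {A} (f : A -> R) l : (forall x, In x l -> 0 <= f x) -> 0 <= lsum f l.
Proof. intros H. rewrite <- (lsum_zero l). apply lsum_le; auto. Qed.
Lemma lsum_perm {A} (f : A -> R) l1 l2 : Permutation l1 l2 -> lsum f l1 = lsum f l2.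
Proof. induction 1; unfold lsum in *; simpl; try lra. Qed.

Fixpoint succ (s u : R) (T : tree) : list (tree * R) :=
  match T with
  | Leaf => [(Bin Leaf Leaf, s); (Mark Leaf, u)]
  | Mark t => map (fun p => (Mark (fst p), snd p)) (succ s u t)
  | Bin l r => map (fun p => (Bin (fst p) r, snd p)) (succ s u l)
              ++ map (fun p => (Bin l (fst p), snd p)) (succ s u r)
  end.

Lemma preds_size s u T p : In p (preds s u T) -> tsize T = S (tsize (fst p)).
Proof.
  revert p; induction T as [|t IH|l IHl r IHr]; intros p H; simpl in H.
  - destruct H.
  - apply in_app_or in H; destruct H as [H|H].
    + destruct t; simpl in H; try tauto. destruct H as [<-|[]]; reflexivity.
    + apply in_map_iff in H; destruct H as [q [<- Hq]]. simpl. rewrite (IH q Hq); reflexivity.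
  - apply in_app_or in H; destruct H as [H|H].
    + destruct l; try (simpl in H; tauto); destruct r; simpl in H; try tauto.
      destruct H as [<-|[]]; reflexivity.
    + apply in_app_or in H; destruct H as [H|H]; apply in_map_iff in H; destruct H as [q [<- Hq]]; simpl.
      * rewrite (IHl q Hq); simpl; lia.
      * rewrite (IHr q Hq); simpl; lia.
Qed.

Lemma succ_size s u T p : In p (succ s u T) -> tsize (fst p) = S (tsize T).
Proof.
  revert p; induction T as [|t IH|l IHl r IHr]; intros p H; simpl in H.
  - destruct H as [<-|[<-|[]]]; reflexivity.
  - apply in_map_iff in H; destruct H as [q [<- Hq]]. simpl. rewrite (IH q Hq); reflexivity.
  - apply in_app_or in H; destruct H as [H|H]; apply in_map_iff in H; destruct H as [q [<- Hq]]; simpl.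
    * rewrite (IHl q Hq); simpl; lia.
    * rewrite (IHr q Hq); simpl; lia.
Qed.

Lemma preds_succ s u T T' rho : In (T', rho) (preds s u T) -> In (T, rho) (succ s u T').
Proof.
  revert T' rho; induction T as [|t IH|l IHl r IHr]; intros T' rho H; simpl in H.
  - destruct H.
  - apply in_app_or in H; destruct H as [H|H].
    + destruct t; simpl in H; try tauto. destruct H as [H|[]]; inversion H; subst. simpl; auto.
    + apply in_map_iff in H; destruct H as [[x rx] [Hq Hx]]; simpl in Hq; inversion Hq; subst.
      simpl. apply in_map_iff. exists (t, rho); split; auto.
  - apply in_app_or in H; destruct H as [H|H].
    + destruct l; try (simpl in H; tauto); destruct r; simpl in H; try tauto.
      destruct H as [H|[]]; inversion H; subst; simpl; auto.
    + apply in_app_or in H; destruct H as [H|H]; apply in_map_iff in H;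
        destruct H as [[x rx] [Hq Hx]]; simpl in Hq; inversion Hq; subst; simpl; apply in_or_app.
      * left. apply in_map_iff. exists (l, rho); split; auto.
      * right. apply in_map_iff. exists (r, rho); split; auto.
Qed.

Lemma succ_preds s u T T' rho : In (T, rho) (succ s u T') -> In (T', rho) (preds s u T).
Proof.
  revert T rho; induction T' as [|t IH|l IHl r IHr]; intros T rho H; simpl in H.
  - destruct H as [H|[H|[]]]; inversion H; subst; simpl; auto.
  - apply in_map_iff in H; destruct H as [[x rx] [Hq Hx]]; simpl in Hq; inversion Hq; subst.
    simpl. apply in_or_app; right. apply in_map_iff. exists (t, rho); split; auto.
  - apply in_app_or in H; destruct H as [H|H]; apply in_map_iff in H;
      destruct H as [[x rx] [Hq Hx]]; simpl in Hq; inversion Hq; subst; simpl;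
      apply in_or_app; right; apply in_or_app.
    + left. apply in_map_iff. exists (l, rho); split; auto.
    + right. apply in_map_iff. exists (r, rho); split; auto.
Qed.

Lemma NoDup_map_in {A B} (f : A -> B) l :
  (forall x y, In x l -> In y l -> f x = f y -> x = y) -> NoDup l -> NoDup (map f l).
Proof.
  induction l as [|a l IH]; intros Hi Hn; simpl; constructor.
  - intros Hin. apply in_map_iff in Hin. destruct Hin as [x [Hx Hxl]].
    inversion Hn; subst. assert (x = a) by (apply Hi; simpl; auto). subst; tauto.
  - inversion Hn; subst. apply IH; auto. intros; apply Hi; simpl; auto.
Qed.

Lemma preds_nodup s u T : NoDup (preds s u T).
Proof.
  induction T as [|t IH|l IHl r IHr]; simpl.
  - constructor.
  - apply NoDup_app.
    + destruct t; repeat constructor; simpl; auto.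
    + apply NoDup_map_in; auto. intros [a b] [c d] _ _ H; simpl in H; inversion H; subst; auto.
    + intros a Ha Hb. destruct t; simpl in *; try contradiction; destruct Ha as [Ha|[]]; subst a;
      apply in_map_iff in Hb; destruct Hb as [x [Hx _]]; discriminate.
  - apply NoDup_app.
    + destruct l; try constructor; destruct r; repeat constructor; simpl; auto.
    + apply NoDup_app.
      * apply NoDup_map_in; auto. intros [a b] [c d] _ _ H; simpl in H; inversion H; subst; auto.
      * apply NoDup_map_in; auto. intros [a b] [c d] _ _ H; simpl in H; inversion H; subst; auto.
      * intros a Ha Hb. apply in_map_iff in Ha; apply in_map_iff in Hb.
        destruct Ha as [x [Hx Hxl]]; destruct Hb as [y [Hy Hyl]]. subst a. inversion Hy.
        apply preds_size in Hxl. rewrite <- H0 in Hxl. lia.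
    + intros a Ha Hb. destruct l; destruct r; simpl in *; tauto.
Qed.

Lemma succ_nodup s u T : NoDup (succ s u T).
Proof.
  induction T as [|t IH|l IHl r IHr]; simpl.
  - constructor; [simpl; intros [H|[]]; discriminate | repeat constructor; simpl; auto].
  - apply NoDup_map_in; auto. intros [a b] [c d] _ _ H; simpl in H; inversion H; subst; auto.
  - apply NoDup_app.
    * apply NoDup_map_in; auto. intros [a b] [c d] _ _ H; simpl in H; inversion H; subst; auto.
    * apply NoDup_map_in; auto. intros [a b] [c d] _ _ H; simpl in H; inversion H; subst; auto.
    * intros a Ha Hb. apply in_map_iff in Ha; apply in_map_iff in Hb.
      destruct Ha as [x [Hx Hxl]]; destruct Hb as [y [Hy Hyl]]. subst a. inversion Hy.
      apply succ_size in Hxl. rewrite H0 in Hxl. lia.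
Qed.


Lemma NoDup_flat_map {A B} (g : A -> list B) l : NoDup l -> (forall x, In x l -> NoDup (g x)) ->
  (forall x y b, In x l -> In y l -> In b (g x) -> In b (g y) -> x = y) -> NoDup (flat_map g l).
Proof.
  induction l as [|a l IH]; intros Hn Hg Hd; simpl; [constructor|].
  inversion Hn; subst. apply NoDup_app.
  - apply Hg; simpl; auto.
  - apply IH; auto. + intros; apply Hg; simpl; auto. + intros; eapply Hd; simpl; eauto.
  - intros b Hb Hb'. apply in_flat_map in Hb'. destruct Hb' as [y [Hy Hby]].
    assert (a = y) by (eapply Hd; simpl; eauto). subst; tauto.
Qed.

Lemma trees_h_nodup d : NoDup (trees_h d).
Proof.
  induction d; simpl; [repeat constructor; simpl; tauto|].
  constructor.
  - intros H. apply in_app_or in H; destruct H as [H|H].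
    + apply in_map_iff in H; destruct H as [x [Hx _]]; discriminate.
    + apply in_flat_map in H; destruct H as [x [_ H]]; apply in_map_iff in H; destruct H as [y [Hy _]]; discriminate.
  - apply NoDup_app.
    + apply NoDup_map_in; auto. intros x y _ _ H; inversion H; auto.
    + apply NoDup_flat_map; auto.
      * intros x _. apply NoDup_map_in; auto. intros a b _ _ H; inversion H; auto.
      * intros x y b _ _ H1 H2. apply in_map_iff in H1; apply in_map_iff in H2.
        destruct H1 as [a [<- _]]; destruct H2 as [c [Hc _]]. inversion Hc; auto.
    + intros a H1 H2. apply in_map_iff in H1; destruct H1 as [x [<- _]].
      apply in_flat_map in H2; destruct H2 as [y [_ H]]; apply in_map_iff in H; destruct H as [z [Hz _]]; discriminate.
Qed.

Lemma trees_h_complete T d : (tsize T <= d)%nat -> In T (trees_h d).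
Proof.
  revert d; induction T as [|t IH|l IHl r IHr]; intros d Hd.
  - destruct d; simpl; auto.
  - destruct d; simpl in Hd; [lia|]. simpl. right. apply in_or_app; left. apply in_map. apply IH; lia.
  - destruct d; simpl in Hd; [lia|]. simpl. right. apply in_or_app; right. apply in_flat_map.
    exists l; split; [apply IHl; lia|]. apply in_map; apply IHr; lia.
Qed.

Lemma in_tos T n : In T (trees_of_size n) <-> tsize T = n.
Proof.
  unfold trees_of_size. rewrite filter_In. split.
  - intros [_ H]. apply Nat.eqb_eq; auto.
  - intros H. split; [apply trees_h_complete; lia | apply Nat.eqb_eq; auto].
Qed.

Lemma tos_nodup n : NoDup (trees_of_size n).
Proof. apply NoDup_filter, trees_h_nodup. Qed.

Lemma exchange s u n (F : tree -> R -> tree -> R) :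
  lsum (fun T => lsum (fun p => F (fst p) (snd p) T) (preds s u T)) (trees_of_size (S n)) =
  lsum (fun T' => lsum (fun q => F T' (snd q) (fst q)) (succ s u T')) (trees_of_size n).
Proof.
  set (X1 := flat_map (fun T => map (fun p => (p, T)) (preds s u T)) (trees_of_size (S n))).
  set (X2 := flat_map (fun T' => map (fun q => ((T', snd q), fst q)) (succ s u T')) (trees_of_size n)).
  assert (E1 : lsum (fun x => F (fst (fst x)) (snd (fst x)) (snd x)) X1 =
     lsum (fun T => lsum (fun p => F (fst p) (snd p) T) (preds s u T)) (trees_of_size (S n))).
  { unfold X1. rewrite lsum_flat_map. apply lsum_ext; intros T. rewrite lsum_map. reflexivity. }
  assert (E2 : lsum (fun x => F (fst (fst x)) (snd (fst x)) (snd x)) X2 =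
     lsum (fun T' => lsum (fun q => F T' (snd q) (fst q)) (succ s u T')) (trees_of_size n)).
  { unfold X2. rewrite lsum_flat_map. apply lsum_ext; intros T. rewrite lsum_map. reflexivity. }
  rewrite <- E1, <- E2. apply lsum_perm. apply NoDup_Permutation.
  - apply NoDup_flat_map; [apply tos_nodup| |].
    + intros T _. apply NoDup_map_in; [|apply preds_nodup]. intros a b _ _ H; inversion H; auto.
    + intros x y b _ _ H1 H2. apply in_map_iff in H1; apply in_map_iff in H2.
      destruct H1 as [a [<- _]]; destruct H2 as [c [Hc _]]; inversion Hc; auto.
  - apply NoDup_flat_map; [apply tos_nodup| |].
    + intros T _. apply NoDup_map_in; [|apply succ_nodup]. intros [a b] [c d] _ _ H; inversion H; auto.
    + intros x y b _ _ H1 H2. apply in_map_iff in H1; apply in_map_iff in H2.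
      destruct H1 as [a [<- _]]; destruct H2 as [c [Hc _]]; inversion Hc; auto.
  - intros [[T' rho] T]. unfold X1, X2. rewrite !in_flat_map. split.
    + intros [T0 [HT0 H]]. apply in_map_iff in H; destruct H as [p [Hp Hpin]]. inversion Hp; subst.
      exists T'. apply in_tos in HT0. pose proof (preds_size _ _ _ _ Hpin) as Hs. simpl in Hs.
      split; [apply in_tos; lia|]. apply in_map_iff. exists (T, rho); split; auto.
      apply preds_succ; auto.
    + intros [T0 [HT0 H]]. apply in_map_iff in H; destruct H as [[a b] [Hp Hpin]].
      simpl in Hp. injection Hp as -> -> ->.
      exists T. apply in_tos in HT0. pose proof (succ_size _ _ _ _ Hpin) as Hs. simpl in Hs.
      split; [apply in_tos; lia|]. apply in_map_iff. exists (T', rho); split; auto.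
      apply succ_preds; auto.
Qed.


Fixpoint PK (y : R) (T : tree) : R :=
  match T with Leaf => y | Mark _ => 1 | Bin l r => PK y l * PK y r end.
Fixpoint PN (y : R) (T : tree) : R :=
  match T with Leaf => 1 | Mark t => PN y t | Bin l r => PN y l * PK y r end.

Definition ind (b : bool) : R := if b then 1 else 0.

Lemma lsum_bl_S (F : list bool -> R) n :
  lsum F (bool_lists (S n)) = lsum (fun cs => F (true :: cs) + F (false :: cs)) (bool_lists n).
Proof.
  simpl. rewrite lsum_flat_map. apply lsum_ext; intros cs. unfold lsum; simpl; ring.
Qed.

Lemma weight_total y n : lsum (fun cs => weight y cs * 1) (bool_lists n) = 1.
Proof.
  induction n; [unfold lsum; simpl; unfold weight; simpl; ring|].
  rewrite lsum_bl_S. etransitivity; [|exact IHn]. apply lsum_ext; intros cs. unfold weight; simpl; ring.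
Qed.

Lemma indep y m n (f g : list bool -> R) :
  lsum (fun cs => weight y cs * (f (firstn m cs) * g (skipn m cs))) (bool_lists (m + n)) =
  lsum (fun cs => weight y cs * f cs) (bool_lists m) * lsum (fun cs => weight y cs * g cs) (bool_lists n).
Proof.
  revert f; induction m; intros f.
  - simpl. unfold lsum at 2; simpl. unfold weight at 1; simpl.
    rewrite Rplus_0_r, Rmult_1_l. rewrite Rmult_comm, <- lsum_scal_r. apply lsum_ext; intros. unfold weight. ring.
  - change (S m + n)%nat with (S (m + n)). rewrite !lsum_bl_S.
    transitivity (lsum (fun cs => (y * (weight y cs * (f (true :: firstn m cs) * g (skipn m cs))))
       + ((1 - y) * (weight y cs * (f (false :: firstn m cs) * g (skipn m cs))))) (bool_lists (m + n))).
    { apply lsum_ext; intros cs. unfold weight; simpl. ring. }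
    rewrite lsum_plus, !lsum_scal, (IHm (fun c => f (true :: c))), (IHm (fun c => f (false :: c))).
    transitivity ((y * lsum (fun cs => weight y cs * f (true :: cs)) (bool_lists m)
       + (1 - y) * lsum (fun cs => weight y cs * f (false :: cs)) (bool_lists m)) *
       lsum (fun cs => weight y cs * g cs) (bool_lists n)); [ring|].
    f_equal. rewrite <- !lsum_scal, <- lsum_plus. apply lsum_ext; intros cs. unfold weight; simpl; ring.
Qed.

Lemma snd_fst T cs : snd (eval T cs) = true -> fst (eval T cs) = true.
Proof.
  revert cs; induction T as [|t IH|l IHl r IHr]; intros cs; simpl; auto.
  destruct (fst (eval r (skipn (nleaves l) cs))) eqn:E.
  - intros H. rewrite (IHl _ H). reflexivity.
  - intros H. apply IHr in H. congruence.
Qed.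

Lemma ptype_E y T :
  lsum (fun cs => weight y cs * ind (fst (eval T cs))) (bool_lists (nleaves T)) = PK y T /\
  lsum (fun cs => weight y cs * ind (snd (eval T cs))) (bool_lists (nleaves T)) = y * PN y T.
Proof.
  induction T as [|t IH|l IHl r IHr].
  - simpl. unfold lsum, weight, ind; simpl. split; ring.
  - simpl. split.
    + apply weight_total.
    + rewrite (proj2 IH). reflexivity.
  - simpl nleaves. split.
    + transitivity (lsum (fun cs => weight y cs * ((fun c => ind (fst (eval l c))) (firstn (nleaves l) cs) *
        (fun c => ind (fst (eval r c))) (skipn (nleaves l) cs))) (bool_lists (nleaves l + nleaves r))).
      { apply lsum_ext; intros cs. simpl. unfold ind.
        destruct (fst (eval l _)), (fst (eval r _)); simpl; ring. }
      rewrite (indep y (nleaves l) (nleaves r) (fun c => ind (fst (eval l c))) (fun c => ind (fst (eval r c)))).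
      rewrite (proj1 IHl), (proj1 IHr). reflexivity.
    + transitivity (lsum (fun cs => weight y cs * ((fun c => ind (snd (eval l c))) (firstn (nleaves l) cs) *
        (fun c => ind (fst (eval r c))) (skipn (nleaves l) cs))) (bool_lists (nleaves l + nleaves r))).
      { apply lsum_ext; intros cs. simpl. unfold ind.
        pose proof (snd_fst r (skipn (nleaves l) cs)) as Hr.
        destruct (snd (eval l _)), (fst (eval r _)), (snd (eval r _)); simpl; try ring;
          specialize (Hr eq_refl); discriminate. }
      rewrite (indep y (nleaves l) (nleaves r) (fun c => ind (snd (eval l c))) (fun c => ind (fst (eval r c)))).
      rewrite (proj2 IHl), (proj1 IHr). simpl. ring.
Qed.

Lemma ptype_PN y T : ptype y T = y * PN y T.
Proof.
  rewrite <- (proj2 (ptype_E y T)). unfold ptype. reflexivity.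
Qed.

Lemma PK_bounds y T : 0 <= y <= 1 -> 0 <= PK y T <= 1.
Proof.
  intros Hy; induction T; simpl; try lra.
  split; [apply Rmult_le_pos; tauto|]. rewrite <- (Rmult_1_l 1). apply Rmult_le_compat; tauto.
Qed.
Lemma PN_bounds y T : 0 <= y <= 1 -> 0 <= PN y T <= 1.
Proof.
  intros Hy; induction T; simpl; try lra; auto. pose proof (PK_bounds y T2 Hy).
  split; [apply Rmult_le_pos; tauto|]. rewrite <- (Rmult_1_l 1). apply Rmult_le_compat; tauto.
Qed.


Fixpoint DK (y : R) (T : tree) : R :=
  match T with Leaf => 1 | Mark _ => 0 | Bin l r => DK y l * PK y r + PK y l * DK y r end.
Fixpoint DN (y : R) (T : tree) : R :=
  match T with Leaf => 0 | Mark t => DN y t | Bin l r => DN y l * PK y r + PN y l * DK y r end.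

Definition Lf (T : tree) : R := INR (nleaves T).

Lemma lsum_succ_Mark s u t (f : tree -> R -> R) :
  lsum (fun q => f (fst q) (snd q)) (succ s u (Mark t)) = lsum (fun q => f (Mark (fst q)) (snd q)) (succ s u t).
Proof. simpl. rewrite lsum_map. reflexivity. Qed.
Lemma lsum_succ_Bin s u l r (f : tree -> R -> R) :
  lsum (fun q => f (fst q) (snd q)) (succ s u (Bin l r)) =
  lsum (fun q => f (Bin (fst q) r) (snd q)) (succ s u l) + lsum (fun q => f (Bin l (fst q)) (snd q)) (succ s u r).
Proof. simpl. rewrite lsum_app, !lsum_map. reflexivity. Qed.

Lemma Lf_Bin l r : Lf (Bin l r) = Lf l + Lf r.
Proof. unfold Lf; simpl; rewrite plus_INR; reflexivity. Qed.

Lemma gen_rate s u T : lsum (fun q => snd q) (succ s u T) = (s + u) * Lf T.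
Proof.
  induction T as [|t IH|l IHl r IHr].
  - unfold lsum, Lf; simpl; ring.
  - rewrite (lsum_succ_Mark s u t (fun _ x => x)). rewrite IH. reflexivity.
  - rewrite (lsum_succ_Bin s u l r (fun _ x => x)), IHl, IHr, Lf_Bin. ring.
Qed.

Lemma gen_L s u T : lsum (fun q => snd q * Lf (fst q)) (succ s u T) = (s + u) * Lf T * Lf T + s * Lf T.
Proof.
  induction T as [|t IH|l IHl r IHr].
  - unfold lsum, Lf; simpl; ring.
  - rewrite (lsum_succ_Mark s u t (fun T x => x * Lf T)). exact IH.
  - rewrite (lsum_succ_Bin s u l r (fun T x => x * Lf T)).
    rewrite (lsum_ext _ (fun q => snd q * Lf (fst q) + Lf r * snd q)), lsum_plus, lsum_scal, IHl, gen_rate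
      by (intros; rewrite Lf_Bin; ring).
    rewrite (lsum_ext _ (fun q => snd q * Lf (fst q) + Lf l * snd q) (succ s u r)), lsum_plus, lsum_scal, IHr, gen_rate
      by (intros; rewrite Lf_Bin; ring).
    rewrite Lf_Bin; ring.
Qed.

Lemma gen_size s u T :
  lsum (fun q => snd q * INR (tsize (fst q))) (succ s u T) = (s + u) * Lf T * (INR (tsize T) + 1).
Proof.
  rewrite (lsum_ext_in _ (fun q => snd q * (INR (tsize T) + 1))).
  - rewrite lsum_scal_r, gen_rate. reflexivity.
  - intros q Hq. rewrite (succ_size _ _ _ _ Hq), S_INR. reflexivity.
Qed.

Lemma gen_K s u H T : lsum (fun q => snd q * PK H (fst q)) (succ s u T) =
  (s + u) * Lf T * PK H T + (1 - H) * (u - s * H) * DK H T.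
Proof.
  induction T as [|t IH|l IHl r IHr].
  - unfold lsum, Lf; simpl; ring.
  - rewrite (lsum_succ_Mark s u t (fun T x => x * PK H T)). simpl PK.
    rewrite (lsum_ext _ (fun q => snd q)) by (intros; ring). rewrite gen_rate. unfold Lf; simpl; ring.
  - rewrite (lsum_succ_Bin s u l r (fun T x => x * PK H T)). simpl PK.
    rewrite (lsum_ext _ (fun q => snd q * PK H (fst q) * PK H r)), lsum_scal_r, IHl by (intros; ring).
    rewrite (lsum_ext _ (fun q => PK H l * (snd q * PK H (fst q))) (succ s u r)), lsum_scal, IHr
      by (intros; ring).
    rewrite Lf_Bin; simpl; ring.
Qed.

Lemma gen_N s u H T : lsum (fun q => snd q * PN H (fst q)) (succ s u T) =
  (s + u) * Lf T * PN H T - s * (1 - H) * PN H T + (1 - H) * (u - s * H) * DN H T.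
Proof.
  induction T as [|t IH|l IHl r IHr].
  - unfold lsum, Lf; simpl; ring.
  - rewrite (lsum_succ_Mark s u t (fun T x => x * PN H T)). exact IH.
  - rewrite (lsum_succ_Bin s u l r (fun T x => x * PN H T)). simpl PN.
    rewrite (lsum_ext _ (fun q => snd q * PN H (fst q) * PK H r)), lsum_scal_r, IHl by (intros; ring).
    rewrite (lsum_ext _ (fun q => PN H l * (snd q * PK H (fst q))) (succ s u r)), lsum_scal, gen_K
      by (intros; ring).
    rewrite Lf_Bin; simpl; ring.
Qed.

Lemma isd_const (c x : R) : is_derive (fun _ : R => c) x 0.
Proof. auto_derive; auto. Qed.
Lemma isd_id (x : R) : is_derive (fun y : R => y) x 1.
Proof. auto_derive; auto. Qed.
Lemma isd_mult (f g : R -> R) x df dg : is_derive f x df -> is_derive g x dg ->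
  is_derive (fun y => f y * g y) x (df * g x + f x * dg).
Proof.
  intros Hf Hg. eapply is_derive_ext; [|eapply is_derive_Reals].
  - intros; reflexivity.
  - apply derivable_pt_lim_mult; apply is_derive_Reals; auto.
Qed.
Lemma isd_plus (f g : R -> R) x df dg : is_derive f x df -> is_derive g x dg ->
  is_derive (fun y => f y + g y) x (df + dg).
Proof.
  intros Hf Hg. apply is_derive_Reals. apply derivable_pt_lim_plus; apply is_derive_Reals; auto.
Qed.
Lemma isd_minus (f g : R -> R) x df dg : is_derive f x df -> is_derive g x dg ->
  is_derive (fun y => f y - g y) x (df - dg).
Proof.
  intros Hf Hg. apply is_derive_Reals. apply derivable_pt_lim_minus; apply is_derive_Reals; auto.
Qed.
Lemma isd_scal (c : R) (f : R -> R) x df : is_derive f x df ->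
  is_derive (fun y => c * f y) x (c * df).
Proof.
  intros Hf. apply is_derive_Reals. apply derivable_pt_lim_scal; apply is_derive_Reals; auto.
Qed.
Lemma isd_comp (f g : R -> R) x df dg : is_derive g x dg -> is_derive f (g x) df ->
  is_derive (fun y => f (g y)) x (df * dg).
Proof.
  intros Hg Hf. apply is_derive_Reals. apply (derivable_pt_lim_comp g f); apply is_derive_Reals; auto.
Qed.
Lemma isd_ext (f g : R -> R) (x d d' : R) : (forall y, f y = g y) -> d = d' -> is_derive f x d -> is_derive g x d'.
Proof. intros H -> Hf. eapply is_derive_ext; eauto. Qed.

Lemma derive_PK T H : is_derive (fun h => PK h T) H (DK H T).
Proof.
  induction T as [|t IH|l IHl r IHr]; simpl.
  - apply isd_id.
  - apply isd_const.
  - apply isd_mult; auto.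
Qed.

Lemma derive_PN T H : is_derive (fun h => PN h T) H (DN H T).
Proof.
  induction T as [|t IH|l IHl r IHr]; simpl.
  - apply isd_const.
  - auto.
  - apply isd_mult; auto. apply derive_PK.
Qed.


Lemma isd_lsum {X} (F F' : X -> R -> R) l t :
  (forall x, In x l -> is_derive (F x) t (F' x t)) ->
  is_derive (fun t => lsum (fun x => F x t) l) t (lsum (fun x => F' x t) l).
Proof.
  induction l as [|a l IH]; intros H.
  - exact (isd_const 0 t).
  - apply isd_plus; [apply H; simpl; auto | apply IH; intros; apply H; simpl; auto].
Qed.

Lemma isd_cont (f : R -> R) (t d : R) : is_derive f t d -> continuous f t.
Proof. intros H. apply (ex_derive_continuous (K:=R_AbsRing) (V:=R_NormedModule)). exists d. exact H. Qed.

Lemma isd_exp (f : R -> R) (x df : R) : is_derive f x df -> is_derive (fun t => exp (f t)) x (exp (f x) * df).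
Proof. intros H. apply (isd_comp exp f x (exp (f x)) df H). apply is_derive_exp. Qed.
Lemma isd_lin (a x : R) : is_derive (fun t => a * t) x a.
Proof. apply (isd_ext (fun t => a * t) _ x (a * 1)); [intros; reflexivity|ring|apply isd_scal, isd_id]. Qed.

Lemma preds_rate s u T p : In p (preds s u T) -> snd p = s \/ snd p = u.
Proof.
  revert p; induction T as [|t IH|l IHl r IHr]; intros p H; simpl in H.
  - destruct H.
  - apply in_app_or in H; destruct H as [H|H].
    + destruct t; simpl in H; try tauto. destruct H as [<-|[]]; simpl; auto.
    + apply in_map_iff in H; destruct H as [q [<- Hq]]. simpl. auto.
  - apply in_app_or in H; destruct H as [H|H].
    + destruct l; try (simpl in H; tauto); destruct r; simpl in H; try tauto.
      destruct H as [<-|[]]; simpl; auto.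
    + apply in_app_or in H; destruct H as [H|H]; apply in_map_iff in H; destruct H as [q [<- Hq]]; simpl; auto.
Qed.

Lemma succ_rate s u T p : In p (succ s u T) -> snd p = s \/ snd p = u.
Proof.
  revert p; induction T as [|t IH|l IHl r IHr]; intros p H; simpl in H.
  - destruct H as [<-|[<-|[]]]; simpl; auto.
  - apply in_map_iff in H; destruct H as [q [<- Hq]]. simpl. auto.
  - apply in_app_or in H; destruct H as [H|H]; apply in_map_iff in H; destruct H as [q [<- Hq]]; simpl; auto.
Qed.

Section Law.
Variables s u : R.

Definition Pin (n : nat) (t : R) (T : tree) : R :=
  lsum (fun p => snd p * lawn s u n t (fst p)) (preds s u T).

Definition Dlaw (n : nat) (t : R) (T : tree) : R :=
  match n with
  | O => - ((s + u) * Lf T) * lawn s u O t T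
  | S m => Pin m t T - (s + u) * Lf T * lawn s u n t T
  end.

Lemma Pin_eq n t T : fold_right Rplus 0 (map (fun p => snd p * lawn s u n t (fst p)) (preds s u T)) = Pin n t T.
Proof. reflexivity. Qed.

Lemma lawn_derive n : forall T t, is_derive (fun t => lawn s u n t T) t (Dlaw n t T).
Proof.
  induction n as [|n IH]; intros T t.
  - simpl. destruct T.
    + eapply isd_ext; [intros; reflexivity| |apply isd_exp, (isd_lin (- (s + u)))].
      unfold Lf; simpl; ring.
    + apply (isd_ext (fun _ => 0) _ t 0); [intros; reflexivity| simpl; ring | exact (isd_const 0 t)].
    + apply (isd_ext (fun _ => 0) _ t 0); [intros; reflexivity| simpl; ring | exact (isd_const 0 t)].
  - set (qq := (s + u) * INR (nleaves T)).
    set (h := fun tau => exp (qq * tau) * Pin n tau T).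
    assert (Hh : forall x, continuous h x).
    { intros x. apply (isd_cont _ _ (qq * exp (qq * x) * Pin n x T + exp (qq * x) * lsum (fun p => snd p * Dlaw n x (fst p)) (preds s u T))).
      unfold h. apply (isd_mult (fun y => exp (qq * y)) (fun y => Pin n y T)).
      - eapply isd_ext; [intros; reflexivity| | apply isd_exp, (isd_lin qq)]. ring.
      - unfold Pin. apply (isd_lsum (fun p t => snd p * lawn s u n t (fst p)) (fun p t => snd p * Dlaw n t (fst p))).
        intros p _. apply isd_scal, IH. }
    assert (Hex : forall a b, ex_RInt h a b).
    { intros a b. apply (ex_RInt_continuous (V:=R_CompleteNormedModule)). intros; apply Hh. }
    assert (Heq : forall t, lawn s u (S n) t T = exp (- qq * t) * RInt h 0 t).
    { intros t0. simpl.
      transitivity (scal (exp (- qq * t0)) (RInt h 0 t0)); [|reflexivity].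
      rewrite <- (RInt_scal h 0 t0 (exp (- qq * t0)) (Hex 0 t0)). apply RInt_ext.
      intros x _. unfold h, scal; simpl; unfold mult; simpl. fold qq.
      replace (- (s + u) * INR (nleaves T) * (t0 - x)) with (- qq * t0 + qq * x) by (unfold qq; ring).
      rewrite exp_plus, Pin_eq. ring. }
    eapply isd_ext; [intros; symmetry; apply Heq| |].
    2: { apply isd_mult.
         - apply isd_exp, (isd_lin (- qq)).
         - apply (is_derive_RInt (V:=R_CompleteNormedModule) h (fun b => RInt h 0 b) 0 t); [|apply Hh].
           apply filter_forall. intros b. apply RInt_correct, Hex. }
    change (Dlaw (S n) t T) with (Pin n t T - (s + u) * Lf T * lawn s u (S n) t T).
    rewrite Heq. cbv beta. unfold h. unfold Lf. fold qq.
    replace (exp (- qq * t) * (exp (qq * t) * Pin n t T)) with (exp (- qq * t + qq * t) * Pin n t T)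
      by (rewrite exp_plus; ring).
    replace (- qq * t + qq * t) with 0 by ring. rewrite exp_0. ring.
Qed.

Lemma lawn_cont n T t : continuous (fun t => lawn s u n t T) t.
Proof. eapply isd_cont, lawn_derive. Qed.

Lemma lawn_nonneg (Hs : 0 <= s) (Hu : 0 <= u) n : forall T t, 0 <= t -> 0 <= lawn s u n t T.
Proof.
  induction n as [|n IH]; intros T t Ht.
  - simpl. destruct T; try lra. left; apply exp_pos.
  - simpl. apply RInt_ge_0; auto.
    + apply (ex_RInt_continuous (V:=R_CompleteNormedModule)). intros z _.
      apply (continuous_mult (fun tau => exp (- (s + u) * INR (nleaves T) * (t - tau)))).
      * apply (isd_cont _ _ (exp (- (s + u) * INR (nleaves T) * (t - z)) * ((s + u) * INR (nleaves T)))).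
        apply (isd_exp (fun tau => - (s + u) * INR (nleaves T) * (t - tau))).
        apply (isd_ext (fun tau => (s + u) * INR (nleaves T) * tau + - (s + u) * INR (nleaves T) * t) _ z ((s + u) * INR (nleaves T) + 0)).
        { intros; ring. } { ring. } apply isd_plus; [apply isd_lin| exact (isd_const _ z)].
      * change (continuous (fun tau => Pin n tau T) z). unfold Pin.
        apply (isd_cont _ _ (lsum (fun p => snd p * Dlaw n z (fst p)) (preds s u T))).
        apply (isd_lsum (fun p t => snd p * lawn s u n t (fst p)) (fun p t => snd p * Dlaw n t (fst p))).
        intros p _. apply isd_scal, lawn_derive.
    + intros x Hx. apply Rmult_le_pos; [left; apply exp_pos|].
      apply lsum_nonneg. intros p Hp. apply Rmult_le_pos.
      * destruct (preds_rate _ _ _ _ Hp) as [-> | ->]; auto.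
      * apply IH; lra.
Qed.

Definition law' (t : R) (T : tree) : R := lawn s u (tsize T) t T.

Lemma law_derive T t : is_derive (fun t => law' t T) t
  (lsum (fun p => snd p * law' t (fst p)) (preds s u T) - (s + u) * Lf T * law' t T).
Proof.
  unfold law'. destruct (tsize T) as [|n] eqn:E.
  - eapply isd_ext; [intros; reflexivity| |apply lawn_derive]. simpl.
    destruct T; simpl in E; try discriminate. unfold lsum; simpl. ring.
  - eapply isd_ext; [intros; reflexivity| |apply lawn_derive]. simpl. unfold Pin. f_equal.
    apply lsum_ext_in. intros p Hp. pose proof (preds_size _ _ _ _ Hp) as Hs. rewrite E in Hs.
    injection Hs as Hs. rewrite <- Hs. reflexivity.
Qed.

Lemma law_at0 T : law' 0 T = match T with Leaf => 1 | _ => 0 end.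
Proof.
  unfold law'. destruct (tsize T) eqn:E.
  - destruct T; simpl in E; try discriminate. simpl. replace (- (s + u) * 0) with 0 by ring. apply exp_0.
  - simpl. rewrite RInt_point. destruct T; simpl in E; try discriminate; reflexivity.
Qed.

End Law.


Lemma mono_dec (f df : R -> R) a b : a <= b ->
  (forall t, a <= t <= b -> is_derive f t (df t)) -> (forall t, a <= t <= b -> df t <= 0) -> f b <= f a.
Proof.
  intros Hab Hd Hneg.
  destruct (MVT_gen f a b df) as [c [Hc Heq]].
  - intros x Hx. rewrite Rmin_left, Rmax_right in Hx by lra. apply Hd; lra.
  - intros x Hx. rewrite Rmin_left, Rmax_right in Hx by lra. apply continuity_pt_filterlim.
    apply (isd_cont f x (df x)). apply Hd; lra.
  - rewrite Rmin_left, Rmax_right in Hc by lra.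
    assert (df c * (b - a) <= 0). { apply Rmult_le_0_r; [apply Hneg; lra| lra]. }
    lra.
Qed.

Lemma isd_sum (F F' : nat -> R -> R) N t :
  (forall n, is_derive (F n) t (F' n t)) ->
  is_derive (fun t => sum_f_R0 (fun n => F n t) N) t (sum_f_R0 (fun n => F' n t) N).
Proof.
  intros H; induction N; simpl; auto. apply isd_plus; auto.
Qed.

Lemma tos0 : trees_of_size 0 = [Leaf].
Proof. reflexivity. Qed.

Lemma lsum_pm {X} (f g h : X -> R) l : lsum f l + lsum g l - lsum h l = lsum (fun x => f x + g x - h x) l.
Proof. induction l; unfold lsum in *; simpl; [ring|]. rewrite <- IHl; ring. Qed.

Section Dyn.
Variables s u : R.
Notation law := (law' s u).
Definition lev (n : nat) (F : tree -> R) := lsum F (trees_of_size n).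
Definition Out (phi : R -> tree -> R) t T := lsum (fun q => snd q * phi t (fst q)) (succ s u T).
Definition Gen (phi : R -> tree -> R) t T := Out phi t T - (s + u) * Lf T * phi t T.
Definition SN (phi : R -> tree -> R) N t := sum_f_R0 (fun n => lev n (fun T => law t T * phi t T)) N.

Lemma telescope (X A B : nat -> R) N : A O = 0 -> (forall m, A (S m) = B m) ->
  sum_f_R0 (fun n => X n + A n - B n) N = sum_f_R0 X N - B N.
Proof.
  intros H0 HS. induction N; simpl. - rewrite H0; ring. - rewrite IHN, HS; ring.
Qed.

Lemma dynkin (phi phi' : R -> tree -> R) N t :
  (forall T, is_derive (fun t => phi t T) t (phi' t T)) ->
  is_derive (SN phi N) t
    (sum_f_R0 (fun n => lev n (fun T => law t T * (phi' t T + Gen phi t T))) N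
     - lev N (fun T => law t T * Out phi t T)).
Proof.
  intros Hphi.
  set (Dl := fun t T => lsum (fun p => snd p * law t (fst p)) (preds s u T) - (s + u) * Lf T * law t T).
  assert (H1 : is_derive (SN phi N) t
     (sum_f_R0 (fun n => lev n (fun T => Dl t T * phi t T + law t T * phi' t T)) N)).
  { unfold SN. apply (isd_sum (fun n t => lev n (fun T => law t T * phi t T))
      (fun n t => lev n (fun T => Dl t T * phi t T + law t T * phi' t T))).
    intros n. unfold lev.
    apply (isd_lsum (fun T t => law t T * phi t T) (fun T t => Dl t T * phi t T + law t T * phi' t T)).
    intros T _. apply (isd_mult (fun t => law t T) (fun t => phi t T)); [apply law_derive | apply Hphi]. }
  eapply isd_ext; [intros; reflexivity| |exact H1].
  rewrite <- (telescope _ (fun n => lev n (fun T => lsum (fun p => snd p * law t (fst p)) (preds s u T) * phi t T))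
     (fun n => lev n (fun T => law t T * Out phi t T))).
  - apply sum_eq. intros n _. unfold lev, Dl, Gen.
    rewrite lsum_pm. apply lsum_ext. intros T. ring.
  - unfold lev. rewrite tos0. unfold lsum; simpl. ring.
  - intros m. unfold lev.
    pose (F := fun a b c => b * law t a * phi t c).
    transitivity (lsum (fun T => lsum (fun p => F (fst p) (snd p) T) (preds s u T)) (trees_of_size (S m))).
    { apply lsum_ext; intros T. rewrite <- lsum_scal_r. reflexivity. }
    rewrite (exchange s u m F). apply lsum_ext. intros T. unfold Out. rewrite <- lsum_scal.
    apply lsum_ext; intros; unfold F; ring.
Qed.

End Dyn.


Section Bounds.
Variables s u : R.
Hypothesis Hs : 0 <= s.
Hypothesis Hu : 0 <= u.
Notation law := (law' s u).

Lemma law_nonneg t T : 0 <= t -> 0 <= law t T.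
Proof. intros; apply lawn_nonneg; auto. Qed.

Lemma SN_at0 phi N : SN s u phi N 0 = phi 0 Leaf.
Proof.
  unfold SN. induction N.
  - simpl. unfold lev. rewrite tos0. unfold lsum; simpl. rewrite law_at0. ring.
  - simpl. rewrite IHN. unfold lev.
    rewrite (lsum_ext_in _ (fun _ => 0)); [rewrite lsum_zero; ring|].
    intros T HT. apply in_tos in HT. rewrite law_at0. destruct T; simpl in HT; [discriminate|ring|ring].
Qed.

Lemma Out_nonneg phi t T : (forall T, 0 <= phi t T) -> 0 <= Out s u phi t T.
Proof.
  intros H. apply lsum_nonneg. intros q Hq. apply Rmult_le_pos; auto.
  destruct (succ_rate _ _ _ _ Hq) as [-> | ->]; auto.
Qed.

Lemma Out_le phi psi t T : (forall T, phi t T <= psi t T) -> Out s u phi t T <= Out s u psi t T.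
Proof.
  intros H. apply lsum_le. intros q Hq. apply Rmult_le_compat_l; auto.
  destruct (succ_rate _ _ _ _ Hq) as [-> | ->]; auto.
Qed.

Definition one1 : R -> tree -> R := fun _ _ => 1.

Lemma Out_one t T : Out s u one1 t T = (s + u) * Lf T.
Proof. unfold Out, one1. rewrite <- gen_rate. apply lsum_ext; intros; ring. Qed.

Lemma lev_nonneg n F : (forall T, 0 <= F T) -> 0 <= lev n F.
Proof. intros H; apply lsum_nonneg; auto. Qed.

Lemma sum_le0 (F : nat -> R) N : (forall n, F n = 0) -> sum_f_R0 F N = 0.
Proof. intros H; induction N; simpl; rewrite H; [ring|]. rewrite IHN; ring. Qed.

Lemma dyn_one N t : is_derive (SN s u one1 N) t (- lev N (fun T => law t T * ((s + u) * Lf T))).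
Proof.
  eapply isd_ext; [intros; reflexivity| |apply (dynkin s u one1 (fun _ _ => 0))].
  - rewrite sum_le0. + unfold lev. unfold Rminus. rewrite Rplus_0_l.
      f_equal. apply lsum_ext; intros; rewrite Out_one; ring.
    + intros n. unfold lev. rewrite (lsum_ext _ (fun _ => 0)); [apply lsum_zero|].
      intros T. unfold Gen. rewrite Out_one. unfold one1; ring.
  - intros T. exact (isd_const 1 t).
Qed.

Lemma Lf_nonneg T : 0 <= Lf T.
Proof. apply pos_INR. Qed.

Lemma lev_law_nonneg n t F : 0 <= t -> (forall T, 0 <= F T) -> 0 <= lev n (fun T => law t T * F T).
Proof. intros Ht H. apply lev_nonneg; intros T; apply Rmult_le_pos; auto. apply law_nonneg; auto. Qed.

Lemma exp_le x y : x <= y -> exp x <= exp y.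
Proof. intros [H|H]; [left; apply exp_increasing; auto | subst; lra]. Qed.

Lemma opp_nonpos x : 0 <= x -> - x <= 0.
Proof. intros; lra. Qed.

Lemma P_le1 N r : 0 <= r -> SN s u one1 N r <= 1.
Proof.
  intros Hr. replace 1 with (SN s u one1 N 0) by (rewrite SN_at0; reflexivity).
  apply (mono_dec _ (fun t => - lev N (fun T => law t T * ((s + u) * Lf T)))); auto.
  - intros; apply dyn_one.
  - intros t Ht. apply opp_nonpos, lev_law_nonneg; [lra|]. intros; apply Rmult_le_pos; [lra|apply Lf_nonneg].
Qed.

Lemma sum_scal (c : R) (F : nat -> R) N : sum_f_R0 (fun n => c * F n) N = c * sum_f_R0 F N.
Proof. induction N; simpl; [ring|]. rewrite IHN; ring. Qed.

Definition phiV : R -> tree -> R := fun t T => exp (- s * t) * Lf T.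

Lemma L_bound N t : 0 <= t -> sum_f_R0 (fun n => lev n (fun T => law t T * Lf T)) N <= exp (s * t).
Proof.
  intros Ht.
  assert (Hd : forall t, is_derive (SN s u phiV N) t (- lev N (fun T => law t T * Out s u phiV t T))).
  { intros t0. eapply isd_ext; [intros; reflexivity| |apply (dynkin s u phiV (fun t T => - s * exp (- s * t) * Lf T))].
    - rewrite sum_le0; [ring|]. intros n. unfold lev. rewrite (lsum_ext _ (fun _ => 0)); [apply lsum_zero|].
      intros T. unfold Gen, Out, phiV.
      rewrite (lsum_ext _ (fun q => exp (- s * t0) * (snd q * Lf (fst q)))) by (intros; ring).
      rewrite lsum_scal, gen_L. ring.
    - intros T. unfold phiV. eapply isd_ext; [intros; reflexivity| |apply (isd_mult (fun t => exp (- s * t)) (fun _ => Lf T))].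
      2: { eapply isd_ext; [intros; reflexivity| |apply isd_exp, (isd_lin (- s))]. reflexivity. }
      2: { exact (isd_const _ t0). }
      ring. }
  assert (H1 : SN s u phiV N t <= 1).
  { replace 1 with (SN s u phiV N 0) by (rewrite SN_at0; unfold phiV, Lf; simpl; rewrite Rmult_0_r, exp_0; ring).
    apply (mono_dec _ _ 0 t Ht (fun t _ => Hd t)). intros t0 Ht0.
    apply opp_nonpos, lev_law_nonneg; [lra|]. intros T. apply Out_nonneg.
    intros T'. unfold phiV. apply Rmult_le_pos; [left; apply exp_pos| apply Lf_nonneg]. }
  unfold SN, phiV in H1.
  rewrite (sum_eq _ (fun n => exp (- s * t) * lev n (fun T => law t T * Lf T))) in H1.
  2: { intros n _. unfold lev. rewrite <- lsum_scal. apply lsum_ext; intros; ring. }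
  rewrite sum_scal in H1.
  assert (Hp : 0 < exp (s * t)) by apply exp_pos.
  replace (sum_f_R0 (fun n => lev n (fun T => law t T * Lf T)) N) with
     (exp (s * t) * (exp (- s * t) * sum_f_R0 (fun n => lev n (fun T => law t T * Lf T)) N)).
  - rewrite <- (Rmult_1_r (exp (s * t))) at 2. apply Rmult_le_compat_l; lra.
  - rewrite <- Rmult_assoc, <- exp_plus. replace (s * t + - s * t) with 0 by ring. rewrite exp_0; ring.
Qed.

Definition phiM : R -> tree -> R := fun _ T => INR (tsize T).

Lemma tail_bound N r : 0 <= r -> (INR N + 1) * (1 - SN s u one1 N r) <= (s + u) * exp (s * r) * r.
Proof.
  intros Hr.
  assert (HdM : forall t, is_derive (SN s u phiM N) t
     ((s + u) * sum_f_R0 (fun n => lev n (fun T => law t T * Lf T)) N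
      - (INR N + 1) * lev N (fun T => law t T * ((s + u) * Lf T)))).
  { intros t. eapply isd_ext; [intros; reflexivity| |apply (dynkin s u phiM (fun _ _ => 0))].
    - f_equal.
      + rewrite <- sum_scal. apply sum_eq. intros n _. unfold lev. rewrite <- lsum_scal. apply lsum_ext.
        intros T. unfold Gen, Out, phiM. rewrite gen_size. ring.
      + unfold lev. rewrite <- lsum_scal. apply lsum_ext_in. intros T HT. apply in_tos in HT.
        unfold Out, phiM. rewrite gen_size, HT. ring.
    - intros T. exact (isd_const _ t). }
  set (X := fun t => SN s u phiM N t - (INR N + 1) * SN s u one1 N t - (s + u) * exp (s * r) * t).
  assert (HX : X r <= X 0).
  { apply (mono_dec X (fun t => (s + u) * sum_f_R0 (fun n => lev n (fun T => law t T * Lf T)) N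
      - (s + u) * exp (s * r))); auto.
    - intros t Ht. unfold X.
      eapply isd_ext; [intros; reflexivity| |].
      2: { apply isd_minus; [apply isd_minus; [apply HdM| apply isd_scal, dyn_one]| apply (isd_lin ((s + u) * exp (s * r)))]. }
      ring.
    - intros t Ht. assert (H1 := L_bound N t (proj1 Ht)).
      assert (exp (s * t) <= exp (s * r)).
      { destruct (Req_dec s 0) as [->|Hs0]; [rewrite !Rmult_0_l; lra|].
        apply exp_le. apply Rmult_le_compat_l; lra. }
      assert (0 <= s + u) by lra. 
      assert (Hk : (s + u) * sum_f_R0 (fun n => lev n (fun T => law t T * Lf T)) N <= (s + u) * exp (s * r)).
      { apply Rmult_le_compat_l; lra. }
      lra. }
  unfold X in HX. rewrite !SN_at0 in HX. replace (phiM 0 Leaf) with 0 in HX by reflexivity.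
  replace (one1 0 Leaf) with 1 in HX by reflexivity.
  assert (HM : 0 <= SN s u phiM N r).
  { unfold SN. clear HX HdM X. induction N; simpl.
    - apply lev_law_nonneg; [auto|]. intros; apply pos_INR.
    - apply Rplus_le_le_0_compat; auto. apply lev_law_nonneg; [auto|]. intros; apply pos_INR. }
  lra.
Qed.

End Bounds.


Section Main.
Variables s u : R.
Hypothesis Hs : 0 <= s.
Hypothesis Hu : 0 <= u.
Notation law := (law' s u).

Lemma main_bound r (phi phi' : R -> tree -> R) : 0 <= r ->
  (forall t, 0 <= t <= r -> forall T, is_derive (fun t => phi t T) t (phi' t T)) ->
  (forall t, 0 <= t <= r -> forall T, phi' t T + Gen s u phi t T = 0) ->
  (forall t, 0 <= t <= r -> forall T, 0 <= phi t T <= 1) ->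
  forall N, phi 0 Leaf - (s + u) * exp (s * r) * r / (INR N + 1) <= SN s u phi N r <= phi 0 Leaf.
Proof.
  intros Hr Hd Hg Hb N.
  set (D := fun t => sum_f_R0 (fun n => lev n (fun T => law t T * (phi' t T + Gen s u phi t T))) N
     - lev N (fun T => law t T * Out s u phi t T)).
  assert (HD : forall t, 0 <= t <= r -> is_derive (SN s u phi N) t (D t)).
  { intros t Ht. apply dynkin. intros T; apply Hd; auto. }
  assert (HD0 : forall t, 0 <= t <= r -> D t = - lev N (fun T => law t T * Out s u phi t T)).
  { intros t Ht. unfold D. rewrite sum_le0; [ring|]. intros n. unfold lev.
    rewrite (lsum_ext _ (fun _ => 0)); [apply lsum_zero|]. intros T. rewrite Hg; auto; ring. }
  split.
  - assert (Hg2 : SN s u one1 N r - SN s u phi N r <= SN s u one1 N 0 - SN s u phi N 0).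
    { apply (mono_dec (fun t => SN s u one1 N t - SN s u phi N t) (fun t => - lev N (fun T => law t T * ((s + u) * Lf T))
            - D t) 0 r); auto.
      - intros t Ht. apply isd_minus; [apply dyn_one; auto| apply HD; auto].
      - intros t Ht. rewrite HD0 by auto.
        assert (lev N (fun T => law t T * Out s u phi t T) <= lev N (fun T => law t T * ((s + u) * Lf T))).
        { apply lsum_le. intros T _. apply Rmult_le_compat_l; [apply law_nonneg; auto; lra|].
          rewrite <- (Out_one s u t T). apply (Out_le s u Hs Hu). intros T'. unfold one1. apply (proj2 (Hb t Ht T')). }
        lra. }
    rewrite !SN_at0 in Hg2 by auto. unfold one1 at 2 in Hg2.
    pose proof (tail_bound s u Hs Hu N r Hr) as Ht.
    assert (HN : 0 < INR N + 1) by (pose proof (pos_INR N); lra).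
    assert (1 - SN s u one1 N r <= (s + u) * exp (s * r) * r / (INR N + 1)).
    { apply (Rmult_le_reg_l (INR N + 1)); auto. field_simplify; [|lra]. lra. }
    lra.
  - rewrite <- (SN_at0 s u phi N). apply (mono_dec (SN s u phi N) D 0 r); auto.
    intros t Ht. rewrite HD0 by auto. apply opp_nonpos. apply lev_law_nonneg; auto; [lra|].
    intros T. apply (Out_nonneg s u Hs Hu). intros T'; apply (proj1 (Hb t Ht T')).
Qed.

Lemma lim_inv_N (C : R) : is_lim_seq (fun N => C / (INR N + 1)) 0.
Proof.
  assert (H1 : is_lim_seq (fun N => INR N + 1) p_infty).
  { apply (is_lim_seq_ext (fun n => INR (S n))); [intros; apply S_INR|].
    apply (is_lim_seq_incr_1 INR p_infty), is_lim_seq_INR. }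
  apply is_lim_seq_inv in H1; [|discriminate]. simpl in H1.
  apply (is_lim_seq_scal_l _ C) in H1. simpl in H1. rewrite Rmult_0_r in H1.
  eapply is_lim_seq_ext; [|exact H1]. intros; unfold Rdiv; reflexivity.
Qed.

Lemma main_lim r (phi phi' : R -> tree -> R) : 0 <= r ->
  (forall t, 0 <= t <= r -> forall T, is_derive (fun t => phi t T) t (phi' t T)) ->
  (forall t, 0 <= t <= r -> forall T, phi' t T + Gen s u phi t T = 0) ->
  (forall t, 0 <= t <= r -> forall T, 0 <= phi t T <= 1) ->
  is_lim_seq (fun N => SN s u phi N r) (phi 0 Leaf).
Proof.
  intros Hr Hd Hg Hb.
  apply (is_lim_seq_le_le (fun N => phi 0 Leaf - (s + u) * exp (s * r) * r / (INR N + 1)) _ (fun _ => phi 0 Leaf)).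
  - intros N; apply (main_bound r phi phi'); auto.
  - replace (Finite (phi 0 Leaf)) with (Finite (phi 0 Leaf - 0)) by (f_equal; ring).
    apply is_lim_seq_minus'; [apply is_lim_seq_const| apply lim_inv_N].
  - apply is_lim_seq_const.
Qed.

End Main.


Lemma isd_RInt (a : R -> R) (Hc : forall x, continuous a x) tau :
  is_derive (fun tau => RInt a 0 tau) tau (a tau).
Proof.
  apply (is_derive_RInt (V:=R_CompleteNormedModule) a (fun b => RInt a 0 b) 0 tau); [|apply Hc].
  apply filter_forall. intros b. apply RInt_correct.
  apply (ex_RInt_continuous (V:=R_CompleteNormedModule)). intros; apply Hc.
Qed.

Lemma RInt_nonneg (a : R -> R) (Hc : forall x, continuous a x) t :
  0 <= t -> (forall x, 0 <= x <= t -> 0 <= a x) -> 0 <= RInt a 0 t.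
Proof.
  intros Ht H. apply RInt_ge_0; auto.
  - apply (ex_RInt_continuous (V:=R_CompleteNormedModule)). intros; apply Hc.
  - intros; apply H; lra.
Qed.

Lemma const_on (g : R -> R) r : 0 <= r -> (forall t, 0 <= t <= r -> is_derive g t 0) ->
  forall t, 0 <= t <= r -> g t = g 0.
Proof.
  intros Hr Hd t Ht. apply Rle_antisym.
  - apply (mono_dec g (fun _ => 0) 0 t); [lra| |]. + intros; apply Hd; lra. + intros; lra.
  - assert (- g t <= - g 0); [|lra].
    apply (mono_dec (fun t => - g t) (fun _ => - 0) 0 t); [lra| |].
    + intros x Hx. apply (isd_ext (fun t => 0 - g t) (fun t => - g t) x (0 - 0) (- 0)); [intros; ring| ring|]. apply isd_minus; [apply isd_const| apply Hd; lra].
    + intros; lra.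
Qed.

Lemma lin_ode (f a : R -> R) r : 0 <= r -> (forall x, continuous a x) ->
  (forall t, 0 <= t <= r -> is_derive f t (- a t * f t)) ->
  forall t, 0 <= t <= r -> f t = f 0 * exp (- RInt a 0 t).
Proof.
  intros Hr Hc Hd t Ht.
  assert (H := const_on (fun t => f t * exp (RInt a 0 t)) r Hr).
  assert (E : f t * exp (RInt a 0 t) = f 0 * exp (RInt a 0 0)).
  { apply H; auto. intros x Hx.
    apply (isd_ext (fun t => f t * exp (RInt a 0 t)) _ x (- a x * f x * exp (RInt a 0 x) + f x * (exp (RInt a 0 x) * a x)));
      [intros; reflexivity| ring|].
    apply (isd_mult f (fun t => exp (RInt a 0 t))); [apply Hd; auto|].
    apply (isd_exp (fun t => RInt a 0 t)). apply isd_RInt; auto. }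
  rewrite RInt_point in E. change (zero : R) with 0 in E. rewrite exp_0, Rmult_1_r in E. rewrite <- E. rewrite Rmult_assoc, <- exp_plus.
  replace (RInt a 0 t + - RInt a 0 t) with 0 by ring. rewrite exp_0; ring.
Qed.

Lemma cont_aff (c d : R) (g : R -> R) x : continuous g x -> continuous (fun t => c + d * g t) x.
Proof.
  intros H. apply continuity_pt_filterlim in H. apply continuity_pt_filterlim.
  apply (continuity_pt_plus (fun _ => c) (fun t => d * g t)).
  - apply continuity_pt_const; intros ? ?; reflexivity.
  - apply (continuity_pt_scal g d); auto.
Qed.

Section ODE.
Variables s u y0 : R.
Variable y : R -> R.
Hypothesis Hs : 0 <= s.
Hypothesis Hu : 0 <= u.
Hypothesis Hy0 : 0 <= y0 <= 1.
Hypothesis Hy00 : y 0 = y0.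
Hypothesis Hd : forall t, 0 <= t -> is_derive y t (- s * y t * (1 - y t) + u * (1 - y t)).

Definition ytil t := y (Rabs t).

Lemma yt_cont x : continuous ytil x.
Proof.
  unfold ytil. apply (continuous_comp Rabs y); [apply continuous_Rabs|].
  eapply isd_cont, Hd, Rabs_pos.
Qed.

Lemma yt_eq t : 0 <= t -> ytil t = y t.
Proof. intros; unfold ytil; rewrite Rabs_pos_eq; auto. Qed.

Lemma cont_yt_aff c d x : continuous (fun t => c + d * ytil t) x.
Proof. apply cont_aff, yt_cont. Qed.

Lemma y_le1 t : 0 <= t -> y t <= 1.
Proof.
  intros Ht.
  assert (H := lin_ode (fun t => 1 - y t) (fun t => u + - s * ytil t) t Ht (cont_yt_aff u (- s))).
  assert (E : 1 - y t = (1 - y 0) * exp (- RInt (fun t => u + - s * ytil t) 0 t)).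
  { apply H; [|lra]. intros x Hx.
    apply (isd_ext (fun t => 1 - y t) _ x (0 - (- s * y x * (1 - y x) + u * (1 - y x)))); [reflexivity| |].
    - rewrite yt_eq by lra. ring.
    - apply isd_minus; [apply isd_const| apply Hd; lra]. }
  assert (0 <= (1 - y 0) * exp (- RInt (fun t => u + - s * ytil t) 0 t)).
  { apply Rmult_le_pos; [lra| left; apply exp_pos]. }
  lra.
Qed.

Lemma y_ge0 t : 0 <= t -> 0 <= y t.
Proof.
  intros Ht.
  set (b := fun t => 0 + s * (1 + (-1) * ytil t)).
  assert (Hb : forall x, continuous b x).
  { intros x. unfold b. apply cont_aff. apply (continuous_ext (fun t => 1 + -1 * ytil t)); [reflexivity|].
    apply cont_yt_aff. }
  set (g := fun t => y t * exp (RInt b 0 t)).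
  assert (H : - g t <= - g 0).
  { apply (mono_dec (fun t => - g t) (fun x => - (u * (1 - y x) * exp (RInt b 0 x))) 0 t Ht).
    - intros x Hx. unfold g.
      apply (isd_ext (fun t => 0 - y t * exp (RInt b 0 t)) _ x
         (0 - ((- s * y x * (1 - y x) + u * (1 - y x)) * exp (RInt b 0 x) + y x * (exp (RInt b 0 x) * b x))));
        [intros; ring| |].
      + unfold b. rewrite yt_eq by lra. ring.
      + apply isd_minus; [apply isd_const|]. apply (isd_mult y (fun t => exp (RInt b 0 t))); [apply Hd; lra|].
        apply (isd_exp (fun t => RInt b 0 t)). apply isd_RInt; auto.
    - intros x Hx. apply opp_nonpos. apply Rmult_le_pos; [|left; apply exp_pos].
      apply Rmult_le_pos; auto. pose proof (y_le1 x (proj1 Hx)); lra. }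
  unfold g in H. rewrite RInt_point in H. change (zero : R) with 0 in H. rewrite exp_0, Rmult_1_r, Hy00 in H.
  assert (0 <= y t * exp (RInt b 0 t)) by lra.
  assert (0 < exp (RInt b 0 t)) by apply exp_pos.
  destruct (Rle_or_lt 0 (y t)) as [|Hn]; auto. nra.
Qed.

Definition Aint tau := RInt (fun xi => 1 + (-1) * ytil xi) 0 tau.

Lemma Aint_nonneg tau : 0 <= tau -> 0 <= Aint tau.
Proof.
  intros Ht. apply RInt_nonneg; auto. - intros; apply cont_yt_aff.
  - intros x Hx. rewrite yt_eq by lra. pose proof (y_le1 x (proj1 Hx)); lra.
Qed.

Lemma Aint_eq tau : 0 <= tau -> Aint tau = RInt (fun xi => 1 - y xi) 0 tau.
Proof.
  intros Ht. unfold Aint. apply RInt_ext. intros x Hx.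
  rewrite Rmin_left, Rmax_right in Hx by lra. rewrite yt_eq by lra.
  replace (1 - y x) with (1 + -1 * y x) by ring. reflexivity.
Qed.

Lemma Aint_0 : Aint 0 = 0.
Proof. unfold Aint. rewrite RInt_point. reflexivity. Qed.

Lemma Aint_derive tau : is_derive Aint tau (1 + (-1) * ytil tau).
Proof. apply (isd_RInt (fun xi => 1 + (-1) * ytil xi)). intros; apply cont_yt_aff. Qed.

Lemma w_formula t : 0 <= t -> u - s * y t = (u - s * y0) * exp (- s * Aint t).
Proof.
  intros Ht.
  set (a := fun t => 0 + s * (1 + (-1) * ytil t)).
  assert (Ha : forall x, continuous a x).
  { intros x. unfold a. apply cont_aff. apply cont_yt_aff. }
  assert (H := lin_ode (fun t => u - s * y t) a t Ht Ha).
  rewrite H; [|intros x Hx|lra].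
  - assert (E : RInt a 0 t = s * Aint t).
    { unfold a, Aint.
      rewrite (RInt_ext _ (fun x => scal s (1 + -1 * ytil x))) by (intros; unfold scal; simpl; unfold mult; simpl; ring).
      rewrite (RInt_scal (V:=R_CompleteNormedModule) (fun x => 1 + -1 * ytil x)). + reflexivity.
      + apply (ex_RInt_continuous (V:=R_CompleteNormedModule)). intros; apply cont_yt_aff. }
    rewrite Hy00, E. f_equal. f_equal. ring.
  - apply (isd_ext (fun t => u - s * y t) _ x (0 - s * (- s * y x * (1 - y x) + u * (1 - y x)))); [reflexivity| |].
    + unfold a. rewrite yt_eq by lra. ring.
    + apply isd_minus; [apply isd_const| apply isd_scal, Hd; lra].
Qed.
End ODE.


Section J.
Variables s u y0 : R.
Variable y : R -> R.
Hypothesis Hs : 0 <= s.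
Hypothesis Hu : 0 <= u.
Hypothesis Hy0 : 0 <= y0 <= 1.
Hypothesis Hy00 : y 0 = y0.
Hypothesis Hd : forall t, 0 <= t -> is_derive y t (- s * y t * (1 - y t) + u * (1 - y t)).
Variable r : R.
Hypothesis Hr : 0 <= r.

Definition Yp tau := - s * y tau * (1 - y tau) + u * (1 - y tau).
Definition phiJ t T := exp (- s * Aint y (r - t)) * PN (y (r - t)) T.
Definition phiJ' t T := exp (- s * Aint y (r - t)) * (- s * ((1 + -1 * ytil y (r - t)) * (0 - 1))) * PN (y (r - t)) T
   + exp (- s * Aint y (r - t)) * (DN (y (r - t)) T * (Yp (r - t) * (0 - 1))).

Lemma isd_rmt t : is_derive (fun t => r - t) t (0 - 1).
Proof. apply isd_minus; [apply isd_const|apply isd_id]. Qed.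

Lemma phiJ_derive t T : 0 <= t <= r -> is_derive (fun t => phiJ t T) t (phiJ' t T).
Proof.
  intros Ht. unfold phiJ, phiJ'.
  apply (isd_mult (fun t => exp (- s * Aint y (r - t))) (fun t => PN (y (r - t)) T)).
  - apply (isd_exp (fun t => - s * Aint y (r - t))). apply isd_scal.
    apply (isd_comp (Aint y) (fun t => r - t)); [apply isd_rmt|]. apply (Aint_derive s u); auto.
  - apply (isd_comp (fun h => PN h T) (fun t => y (r - t))); [|apply derive_PN].
    apply (isd_comp y (fun t => r - t)); [apply isd_rmt|]. apply Hd; lra.
Qed.

Lemma phiJ_gen t T : 0 <= t <= r -> phiJ' t T + Gen s u phiJ t T = 0.
Proof.
  intros Ht. unfold Gen, Out, phiJ, phiJ', Yp.
  rewrite (lsum_ext _ (fun q => exp (- s * Aint y (r - t)) * (snd q * PN (y (r - t)) (fst q)))) by (intros; ring).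
  rewrite lsum_scal, gen_N. rewrite yt_eq by lra. ring.
Qed.

Lemma y_bounds tau : 0 <= tau -> 0 <= y tau <= 1.
Proof. intros; split; [apply (y_ge0 s u y0 y)|apply (y_le1 s u y0 y)]; auto. Qed.

Lemma phiJ_bounds t T : 0 <= t <= r -> 0 <= phiJ t T <= 1.
Proof.
  intros Ht. unfold phiJ.
  assert (HA : 0 <= Aint y (r - t)) by (apply Aint_nonneg with (s := s) (u := u) (y0 := y0); auto; lra).
  assert (HE : exp (- s * Aint y (r - t)) <= 1).
  { rewrite <- exp_0. apply exp_le. assert (0 <= s * Aint y (r - t)) by (apply Rmult_le_pos; auto). lra. }
  pose proof (exp_pos (- s * Aint y (r - t))).
  pose proof (PN_bounds (y (r - t)) T (y_bounds (r - t) ltac:(lra))).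
  split; [apply Rmult_le_pos; lra|]. rewrite <- (Rmult_1_r 1). apply Rmult_le_compat; lra.
Qed.

Lemma g_formula_A : g s u r y0 = y0 * exp (- s * Aint y r).
Proof.
  assert (HL := main_lim s u Hs Hu r phiJ phiJ' Hr (fun t Ht T => phiJ_derive t T Ht)
     (fun t Ht T => phiJ_gen t T Ht) (fun t Ht T => phiJ_bounds t T Ht)).
  assert (E0 : phiJ 0 Leaf = exp (- s * Aint y r)).
  { unfold phiJ. simpl. rewrite Rminus_0_r. ring. }
  rewrite E0 in HL.
  unfold g. apply is_series_unique.
  assert (Hterm : forall n, fold_right Rplus 0 (map (fun T => law s u r T * ptype y0 T) (trees_of_size n))
     = y0 * lev n (fun T => law' s u r T * phiJ r T)).
  { intros n. unfold lev. rewrite <- lsum_scal. unfold lsum. f_equal. apply map_ext. intros T.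
    rewrite ptype_PN. unfold phiJ. rewrite Rminus_diag, Aint_0, Hy00, Rmult_0_r, exp_0. unfold law, law'. ring. }
  assert (HS : is_lim_seq (sum_n (fun n => fold_right Rplus 0 (map (fun T => law s u r T * ptype y0 T) (trees_of_size n))))
     (y0 * exp (- s * Aint y r))).
  2: exact HS.
  apply (is_lim_seq_ext (fun N => y0 * SN s u phiJ N r)).
  - intros N. rewrite sum_n_Reals. unfold SN. rewrite <- sum_scal. apply sum_eq. intros n _. rewrite Hterm. reflexivity.
  - apply (is_lim_seq_scal_l _ y0) in HL. exact HL.
Qed.

End J.


Lemma lim_bound (f : R -> R) (l C k : R) : 0 < k ->
  (forall r, 0 <= r -> Rabs (f r - l) <= C / (1 + k * r)) -> is_lim f p_infty l.
Proof.
  intros Hk H. apply is_lim_spec. intros eps. simpl.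
  exists (Rmax 0 (C / (k * eps))). intros x Hx.
  assert (H0 : 0 <= x) by (pose proof (Rmax_l 0 (C / (k * eps))); lra).
  assert (H1 : C / (k * eps) < x) by (pose proof (Rmax_r 0 (C / (k * eps))); lra).
  pose proof (cond_pos eps) as He.
  eapply Rle_lt_trans; [apply H; auto|].
  assert (Hd : 0 < 1 + k * x) by nra.
  apply (Rmult_lt_reg_r (1 + k * x)); auto. unfold Rdiv. rewrite Rmult_assoc, Rinv_l by lra.
  rewrite Rmult_1_r.
  assert (C < k * eps * x).
  { apply (Rmult_lt_compat_l (k * eps)) in H1; [|nra]. unfold Rdiv in H1.
    rewrite <- Rmult_assoc, (Rmult_comm (k * eps) C), Rmult_assoc, Rinv_r, Rmult_1_r in H1 by nra. lra. }
  nra.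
Qed.

Lemma exp_neg_bound x : 0 <= x -> exp (- x) <= 1 / (1 + x).
Proof.
  intros Hx. rewrite exp_Ropp. pose proof (exp_ineq1_le x). pose proof (exp_pos x).
  unfold Rdiv. rewrite Rmult_1_l. apply Rinv_le_contravar; lra.
Qed.

Lemma isd_div (f g : R -> R) (x df dg : R) : is_derive f x df -> is_derive g x dg -> g x <> 0 ->
  is_derive (fun y => f y / g y) x ((df * g x - dg * f x) / (g x)²).
Proof.
  intros Hf Hg Hn. apply is_derive_Reals. apply (derivable_pt_lim_div f g); auto; apply is_derive_Reals; auto.
Qed.

Section Sol.
Variables s u y0 : R.
Hypothesis Hs : 0 <= s.
Hypothesis Hu : 0 < u.
Hypothesis Hy0 : 0 <= y0 <= 1.

Definition psi t := if Req_EM_T (u - s) 0 then t else (1 - exp (- (u - s) * t)) / (u - s).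
Definition zs t := (1 - y0) * exp (- (u - s) * t) / (1 + s * (1 - y0) * psi t).
Definition ys t := 1 - zs t.

Lemma dpsi t : (u - s) * psi t = 1 - exp (- (u - s) * t).
Proof.
  unfold psi. destruct (Req_EM_T (u - s) 0) as [e|n].
  - rewrite e. replace (- 0 * t) with 0 by ring. rewrite exp_0. ring.
  - field; auto.
Qed.

Lemma psi_derive t : is_derive psi t (exp (- (u - s) * t)).
Proof.
  unfold psi. destruct (Req_EM_T (u - s) 0) as [e|n].
  - rewrite e. replace (- 0 * t) with 0 by ring. rewrite exp_0. apply isd_id.
  - apply (isd_ext (fun t => (1 - exp (- (u - s) * t)) * / (u - s)) _ t
      ((0 - exp (- (u - s) * t) * (- (u - s))) * / (u - s) + (1 - exp (- (u - s) * t)) * 0)); [intros; reflexivity| field; auto|].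
    apply (isd_mult (fun t => 1 - exp (- (u - s) * t)) (fun _ => / (u - s))); [|exact (isd_const _ t)].
    apply isd_minus; [apply isd_const|]. apply (isd_exp (fun t => - (u - s) * t)), isd_lin.
Qed.

Lemma psi_0 : psi 0 = 0.
Proof. unfold psi. destruct (Req_EM_T (u - s) 0); [reflexivity|]. rewrite Rmult_0_r, exp_0. field; auto. Qed.

Lemma psi_nonneg t : 0 <= t -> 0 <= psi t.
Proof.
  intros Ht. unfold psi. destruct (Req_EM_T (u - s) 0) as [e|n]; auto.
  destruct (Rlt_or_le 0 (u - s)) as [Hp|Hn].
  - assert (exp (- (u - s) * t) <= 1).
    { rewrite <- exp_0. apply exp_le. nra. }
    unfold Rdiv. apply Rmult_le_pos; [lra| left; apply Rinv_0_lt_compat; auto].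
  - assert (Hneg : u - s < 0) by lra.
    assert (1 <= exp (- (u - s) * t)).
    { rewrite <- exp_0. apply exp_le. nra. }
    replace ((1 - exp (- (u - s) * t)) / (u - s)) with ((exp (- (u - s) * t) - 1) / (- (u - s))) by (field; lra).
    unfold Rdiv. apply Rmult_le_pos; [lra| left; apply Rinv_0_lt_compat; lra].
Qed.

Lemma psi_ge t : u <= s -> 0 <= t -> t <= psi t.
Proof.
  intros Hus Ht. unfold psi. destruct (Req_EM_T (u - s) 0) as [e|n]; [lra|].
  assert (Hneg : u - s < 0) by lra.
  pose proof (exp_ineq1_le (- (u - s) * t)).
  replace ((1 - exp (- (u - s) * t)) / (u - s)) with ((exp (- (u - s) * t) - 1) / (- (u - s))) by (field; lra).
  apply (Rmult_le_reg_l (- (u - s))); [lra|]. unfold Rdiv.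
  rewrite (Rmult_comm (exp (- (u - s) * t) - 1)), <- Rmult_assoc, Rinv_r, Rmult_1_l by lra. nra.
Qed.

Lemma Dpos t : 0 <= t -> 1 <= 1 + s * (1 - y0) * psi t.
Proof.
  intros Ht. pose proof (psi_nonneg t Ht). assert (0 <= s * (1 - y0)) by (apply Rmult_le_pos; lra).
  assert (0 <= s * (1 - y0) * psi t) by (apply Rmult_le_pos; auto). lra.
Qed.

Lemma ys_0 : ys 0 = y0.
Proof. unfold ys, zs. rewrite psi_0, Rmult_0_r, exp_0. field. Qed.

Lemma ys_derive t : 0 <= t -> is_derive ys t (- s * ys t * (1 - ys t) + u * (1 - ys t)).
Proof.
  intros Ht. pose proof (Dpos t Ht) as HD.
  set (D := 1 + s * (1 - y0) * psi t) in *.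
  set (e := exp (- (u - s) * t)).
  unfold ys.
  apply (isd_ext (fun t => 1 - zs t) _ t
     (0 - ((((1 - y0) * (e * (- (u - s)))) * D - (0 + s * (1 - y0) * e) * ((1 - y0) * e)) / D²))).
  - reflexivity.
  - unfold zs. fold e. fold D. unfold Rsqr. field. lra.
  - apply isd_minus; [apply isd_const|]. unfold zs.
    apply (isd_div (fun t => (1 - y0) * exp (- (u - s) * t)) (fun t => 1 + s * (1 - y0) * psi t)).
    + apply isd_scal. apply (isd_exp (fun t => - (u - s) * t)), isd_lin.
    + apply isd_plus; [apply isd_const| apply isd_scal, psi_derive].
    + fold D. lra.
Qed.

Lemma w_sol t : 0 <= t -> u - s * ys t = (u - s + s * (1 - y0)) / (1 + s * (1 - y0) * psi t).
Proof.
  intros Ht. pose proof (Dpos t Ht) as HD. pose proof (dpsi t) as Hp.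
  unfold ys, zs. replace (exp (- (u - s) * t)) with (1 - (u - s) * psi t) by lra.
  field. lra.
Qed.

End Sol.


Lemma RInt_const_R (c a b : R) : RInt (fun _ => c) a b = (b - a) * c.
Proof. rewrite RInt_const. reflexivity. Qed.

Lemma part1 (s u : R) (Hs : 0 <= s) (Hu : 0 < u) (y0 : R) (y : R -> R) :
      0 <= y0 <= 1 -> y 0 = y0 ->
      (forall t, 0 <= t -> is_derive y t (- s * y t * (1 - y t) + u * (1 - y t))) ->
      (forall r, 0 <= r ->
         g s u r y0 = y0 * exp (- s * RInt (fun xi => 1 - y xi) 0 r)) /\
      (forall r, 0 <= r -> y0 < 1 -> u - s * y0 <> 0 ->
         g s u r y0 = y0 * (u - s * y r) / (u - s * y0)) /\
      (forall r, 0 <= r -> (s * y0 = u \/ y0 = 1) ->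
         g s u r y0 = y0 * exp (- r * s * (1 - y0))).
Proof.
  intros Hy0 Hy00 Hd.
  assert (Hu' : 0 <= u) by lra.
  assert (G : forall r, 0 <= r -> g s u r y0 = y0 * exp (- s * Aint y r)).
  { intros r Hr. apply (g_formula_A s u y0 y); auto. }
  assert (Aconst : forall r c, 0 <= r -> (forall t, 0 <= t -> y t = c) -> (Aint y r : R) = r * (1 - c)).
  { intros r c Hr Hc. rewrite (Aint_eq y r Hr).
    rewrite (RInt_ext _ (fun _ => 1 - c)).
    - rewrite RInt_const_R. ring.
    - intros x Hx. rewrite Rmin_left, Rmax_right in Hx by lra. rewrite Hc by lra. reflexivity. }
  split; [|split].
  - intros r Hr. rewrite G, Aint_eq; auto.
  - intros r Hr _ Hn. rewrite G by auto.
    rewrite (w_formula s u y0 y Hy00 Hd r Hr). field. auto.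
  - intros r Hr [Hsu|H1].
    + assert (Hs0 : 0 < s) by (destruct (Req_dec s 0) as [e|]; [rewrite e in Hsu; lra| lra]).
      assert (Hc : forall t, 0 <= t -> y t = y0).
      { intros t Ht. pose proof (w_formula s u y0 y Hy00 Hd t Ht) as W.
        replace (u - s * y0) with 0 in W by lra. rewrite Rmult_0_l in W.
        apply (Rmult_eq_reg_l s); lra. }
      rewrite G, (Aconst r y0) by auto. f_equal. f_equal. ring.
    + assert (Hc : forall t, 0 <= t -> y t = 1).
      { intros t Ht.
        assert (H := lin_ode (fun t => 1 - y t) (fun t => u + - s * ytil y t) t Ht (cont_yt_aff s u y Hd u (- s))).
        assert (E : 1 - y t = (1 - y 0) * exp (- RInt (fun t => u + - s * ytil y t) 0 t)).
        { apply H; [|lra]. intros x Hx.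
          apply (isd_ext (fun t => 1 - y t) _ x (0 - (- s * y x * (1 - y x) + u * (1 - y x)))); [reflexivity| |].
          - rewrite yt_eq by lra. ring.
          - apply isd_minus; [apply isd_const| apply Hd; lra]. }
        rewrite Hy00, H1 in E. lra. }
      rewrite G, (Aconst r 1), H1 by auto. f_equal. f_equal. ring.
Qed.

Definition ginf (s u : R) (y0 : R) : R :=
  if Rle_dec u s then (if Rlt_dec y0 1 then 0 else 1) else y0 * (u - s) / (u - s * y0).

Lemma glim (s u : R) (Hs : 0 <= s) (Hu : 0 < u) y0 : 0 <= y0 <= 1 ->
  is_lim (fun r => g s u r y0) p_infty (ginf s u y0).
Proof.
  intros Hy0.
  destruct (part1 s u Hs Hu y0 (ys s u y0) Hy0 (ys_0 s u y0) (ys_derive s u y0 Hs Hy0)) as [_ [P2 P3]].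
  destruct (Rlt_or_le y0 1) as [Hlt|Hge].
  2: { assert (e : y0 = 1) by lra. subst y0.
       assert (Hg : ginf s u 1 = 1).
       { unfold ginf. destruct (Rle_dec u s); [destruct (Rlt_dec 1 1); [lra|reflexivity]|]. field. lra. }
       rewrite Hg. apply (lim_bound _ 1 0 1); [lra|]. intros r Hr.
       rewrite P3 by auto. replace (1 * exp (- r * s * (1 - 1)) - 1) with 0
         by (replace (- r * s * (1 - 1)) with 0 by ring; rewrite exp_0; ring).
       rewrite Rabs_R0. unfold Rdiv; rewrite Rmult_0_l; lra. }
  destruct (Req_dec (u - s * y0) 0) as [Hz|Hnz].
  -
    assert (Hus : u <= s) by nra.
    assert (Hs0 : 0 < s) by nra.
    assert (Hg : ginf s u y0 = 0).
    { unfold ginf. destruct (Rle_dec u s); [|lra]. destruct (Rlt_dec y0 1); [reflexivity|lra]. }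
    rewrite Hg. apply (lim_bound _ 0 y0 (s * (1 - y0))); [apply Rmult_lt_0_compat; lra|].
    intros r Hr. rewrite P3 by (auto; left; lra). rewrite Rminus_0_r.
    pose proof (exp_pos (- r * s * (1 - y0))).
    rewrite Rabs_pos_eq by (apply Rmult_le_pos; lra).
    replace (- r * s * (1 - y0)) with (- (s * (1 - y0) * r)) by ring.
    assert (0 <= s * (1 - y0) * r) by (apply Rmult_le_pos; [apply Rmult_le_pos|]; lra).
    pose proof (exp_neg_bound _ H0).
    replace (y0 / (1 + s * (1 - y0) * r)) with (y0 * (1 / (1 + s * (1 - y0) * r))) by (field; lra).
    apply Rmult_le_compat_l; lra.
  - destruct (Rle_dec u s) as [Hus|Hsu].
    +
      assert (Hs0 : 0 < s) by lra.
      assert (Hg : ginf s u y0 = 0).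
      { unfold ginf. destruct (Rle_dec u s); [|lra]. destruct (Rlt_dec y0 1); [reflexivity|lra]. }
      rewrite Hg.
      set (C := Rabs (y0 * (u - s + s * (1 - y0)) / (u - s * y0))).
      apply (lim_bound _ 0 C (s * (1 - y0))); [apply Rmult_lt_0_compat; lra|].
      intros r Hr. rewrite Rminus_0_r, P2 by auto.
      rewrite (w_sol s u y0 Hs Hy0 r Hr).
      pose proof (Dpos s u y0 Hs Hy0 r Hr) as HD.
      pose proof (psi_ge s u r Hus Hr) as Hpsi.
      assert (Hk : 1 + s * (1 - y0) * r <= 1 + s * (1 - y0) * psi s u r).
      { assert (0 <= s * (1 - y0)) by (apply Rmult_le_pos; lra). nra. }
      assert (Hk0 : 0 < 1 + s * (1 - y0) * r).
      { assert (0 <= s * (1 - y0) * r) by (apply Rmult_le_pos; [apply Rmult_le_pos|]; lra). lra. }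
      replace (y0 * ((u - s + s * (1 - y0)) / (1 + s * (1 - y0) * psi s u r)) / (u - s * y0))
        with ((y0 * (u - s + s * (1 - y0)) / (u - s * y0)) * / (1 + s * (1 - y0) * psi s u r)) by (field; lra).
      rewrite Rabs_mult, Rabs_inv, (Rabs_pos_eq (1 + _)) by lra. fold C.
      unfold Rdiv. apply Rmult_le_compat_l; [apply Rabs_pos|].
      apply Rinv_le_contravar; lra.
    +
      assert (Hsu' : s < u) by lra.
      assert (Hg : ginf s u y0 = y0 * (u - s) / (u - s * y0)).
      { unfold ginf. destruct (Rle_dec u s); [lra|reflexivity]. }
      rewrite Hg.
      assert (Hpos : 0 < u - s * y0) by nra.
      set (C := y0 * s * (1 - y0) / (u - s * y0)).
      assert (HC : 0 <= C).
      { unfold C. apply Rmult_le_pos; [apply Rmult_le_pos; [apply Rmult_le_pos|]; lra|].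
        left; apply Rinv_0_lt_compat; lra. }
      apply (lim_bound _ _ C (u - s)); [lra|].
      intros r Hr. rewrite P2 by auto.
      rewrite (w_sol s u y0 Hs Hy0 r Hr).
      pose proof (Dpos s u y0 Hs Hy0 r Hr) as HD.
      pose proof (dpsi s u r) as Hp.
      set (D := 1 + s * (1 - y0) * psi s u r) in *.
      assert (E : y0 * ((u - s + s * (1 - y0)) / D) / (u - s * y0) - y0 * (u - s) / (u - s * y0)
                = C * exp (- (u - s) * r) / D).
      { unfold C. replace (exp (- (u - s) * r)) with (1 - (u - s) * psi s u r) by (rewrite Hp; ring).
        unfold D in *. field. split; lra. }
      rewrite E.
      pose proof (exp_pos (- (u - s) * r)).
      rewrite Rabs_pos_eq by (unfold Rdiv; apply Rmult_le_pos; [apply Rmult_le_pos; lra| left; apply Rinv_0_lt_compat; lra]).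
      assert (0 <= (u - s) * r) by (apply Rmult_le_pos; lra).
      pose proof (exp_neg_bound _ H0) as Hb.
      replace (- (u - s) * r) with (- ((u - s) * r)) by ring.
      apply Rle_trans with (C * exp (- ((u - s) * r))).
      * unfold Rdiv. rewrite <- (Rmult_1_r (C * exp (- ((u - s) * r)))) at 2.
        apply Rmult_le_compat_l; [apply Rmult_le_pos; [auto| left; apply exp_pos]|].
        rewrite <- Rinv_1. apply Rinv_le_contravar; lra.
      * replace (C / (1 + (u - s) * r)) with (C * (1 / (1 + (u - s) * r))) by (field; lra).
        apply Rmult_le_compat_l; auto.
Qed.


Theorem proposition7p1 (s u : R) :
  0 <= s -> 0 < u ->
  (forall (y0 : R) (y : R -> R),
      0 <= y0 <= 1 -> y 0 = y0 ->
      (forall t, 0 <= t -> is_derive y t (- s * y t * (1 - y t) + u * (1 - y t))) ->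
      (forall r, 0 <= r ->
         g s u r y0 = y0 * exp (- s * RInt (fun xi => 1 - y xi) 0 r)) /\
      (forall r, 0 <= r -> y0 < 1 -> u - s * y0 <> 0 ->
         g s u r y0 = y0 * (u - s * y r) / (u - s * y0)) /\
      (forall r, 0 <= r -> (s * y0 = u \/ y0 = 1) ->
         g s u r y0 = y0 * exp (- r * s * (1 - y0)))) /\
  exists ginf : R -> R,
    (forall y0, 0 <= y0 <= 1 -> is_lim (fun r => g s u r y0) p_infty (ginf y0)) /\
    (s = 0 -> forall y0, 0 <= y0 <= 1 -> ginf y0 = y0) /\
    (u <= s -> (forall y0, 0 <= y0 < 1 -> ginf y0 = 0) /\ ginf 1 = 1) /\
    (s < u -> forall y0, 0 <= y0 <= 1 -> ginf y0 = y0 * (u - s) / (u - s * y0)).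
Proof.
  intros Hs Hu. split.
  - intros y0 y Hy0 Hy00 Hd. exact (part1 s u Hs Hu y0 y Hy0 Hy00 Hd).
  - exists (ginf s u). split; [|split; [|split]].
    + intros y0 Hy0. apply glim; auto.
    + intros Hs0 y0 Hy0. unfold ginf. destruct (Rle_dec u s); [lra|]. rewrite Hs0. field. lra.
    + intros Hus. split.
      * intros y0 Hy0. unfold ginf. destruct (Rle_dec u s); [|lra]. destruct (Rlt_dec y0 1); [reflexivity|lra].
      * unfold ginf. destruct (Rle_dec u s); [|lra]. destruct (Rlt_dec 1 1); [lra|reflexivity].
    + intros Hsu y0 Hy0. unfold ginf. destruct (Rle_dec u s); [lra|reflexivity].
Qed.
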